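(* Let $\lambda>0$. For every real $z>2$, $$\int_{-2}^{2}\frac{(4-x^2)^{\lambda-1/2}}{(z-x)^{\lambda}}\,dx \;=\; C_\lambda\,\big[G(z)\big]^{\lambda} \;=\; C_\lambda\left[\int_{-2}^{2}\frac{1}{z-x}\,\frac{\sqrt{4-x^2}}{2\pi}\,dx\right]^{\lambda} \;=\; C_\lambda\,\exp\left(-\lambda\int_{-2}^{2}\log(z-x)\,\frac{dx}{\pi\sqrt{4-x^2}}\right),$$ where $C_\lambda=\int_{-2}^{2}(4-x^2)^{\lambda-1/2}\,dx$.
   Context: $G$ denotes the Cauchy–Stieltjes transform of the standard Wigner (semicircle) law: $G(z)=\int_{-2}^2\frac{1}{z-x}\frac{\sqrt{4-x^2}}{2\pi}dx=\frac{z-\sqrt{z^2-4}}{2}$ for $z\in\mathbb{C}\setminus[-2,2]$ (branch with $G(z)\sim 1/z$ at infinity); for real $z>2$, $G(z)\in(0,1)$. Real powers and logarithms of positive reals are the usual real ones. *)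

(* Defs.v *)
From Stdlib Require Import Reals.
Open Scope R_scope.

(* Cauchy-Stieltjes transform of the semicircle law, closed form,
   for real z > 2: G(z) = (z - sqrt(z^2 - 4)) / 2. *)
Definition G (z : R) : R := (z - sqrt (z ^ 2 - 4)) / 2.

(* For integrands that are
   Riemann integrable on [a,b] this agrees with the ordinary integral. *)
Definition improper_integral (f : R -> R) (a b l : R) : Prop :=
  (forall c d, a < c -> c <= d -> d < b -> inhabited (Riemann_integrable f c d)) /\
  (forall eps, 0 < eps -> exists delta, 0 < delta /\
     forall c d (pr : Riemann_integrable f c d),
       a < c -> c < a + delta -> b - delta < d -> d < b ->
       Rabs (RiemannInt pr - l) < eps).

(* Main.v *)
Require Import Defs.
From Stdlib Require Import Reals Lra Lia Psatz Ranalysis5.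
Open Scope R_scope.

Lemma prim_val (f : R -> R) (a b : R) (h : a <= b)
  (pr : forall x, a <= x -> x <= b -> Riemann_integrable f a x) (s : R)
  (H1 : a <= s) (H2 : s <= b) :
  primitive h pr s = RiemannInt (pr s H1 H2).
Proof.
  unfold primitive. destruct (Rle_dec a s) as [r|r]; [|contradiction].
  destruct (Rle_dec s b) as [r0|r0]; [|contradiction]. apply RiemannInt_P5.
Qed.

Lemma int_diff (f : R -> R) (m M u v : R) (hmM : m <= M)
  (Cf : forall x, m <= x <= M -> continuity_pt f x)
  (Hu : m <= u <= M) (Hv : m <= v <= M) (pr : Riemann_integrable f u v) :
  RiemannInt pr = primitive hmM (FTC_P1 hmM Cf) v - primitive hmM (FTC_P1 hmM Cf) u.
Proof.
  rewrite (prim_val _ _ _ _ _ _ (proj1 Hv) (proj2 Hv)).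
  rewrite (prim_val _ _ _ _ _ _ (proj1 Hu) (proj2 Hu)).
  generalize (FTC_P1 hmM Cf (proj1 Hv) (proj2 Hv)) (FTC_P1 hmM Cf (proj1 Hu) (proj2 Hu)).
  intros p1 p2. rewrite <- (RiemannInt_P26 p2 pr p1). ring.
Qed.

Lemma CoV (f k phi phi' : R -> R) (c d m M : R) (hcd : c <= d) (hmM : m <= M)
  (Cf : forall x, m <= x <= M -> continuity_pt f x)
  (Ck : forall t, c <= t <= d -> continuity_pt k t)
  (Hd : forall t, c <= t <= d -> derivable_pt_lim phi t (phi' t))
  (Hr : forall t, c <= t <= d -> m <= phi t <= M)
  (Hk : forall t, c <= t <= d -> k t = f (phi t) * phi' t)
  (pr1 : Riemann_integrable k c d) (pr2 : Riemann_integrable f (phi c) (phi d)) :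
  RiemannInt pr1 = RiemannInt pr2.
Proof.
  set (F := primitive hmM (FTC_P1 hmM Cf)).
  assert (HF : forall t, c <= t <= d -> derivable_pt_lim (fun t => F (phi t)) t (k t)).
  { intros t Ht. rewrite Hk by exact Ht.
    apply (derivable_pt_lim_comp phi F t (phi' t) (f (phi t))). apply Hd; exact Ht.
    apply RiemannInt_P28. apply Hr; exact Ht. }
  assert (A1 : antiderivative k (fun t => F (phi t)) c d).
  { split; [|exact hcd]. intros t Ht.
    exists (exist _ (k t) (HF t Ht)). symmetry. apply derive_pt_eq_0. apply HF; exact Ht. }
  assert (A2 := RiemannInt_P29 hcd Ck).
  destruct (antiderivative_Ucte _ _ _ _ _ A1 A2) as [K HK].
  rewrite (int_diff f m M (phi c) (phi d) hmM Cf) by (apply Hr; lra).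
  rewrite (RiemannInt_P20 hcd (FTC_P1 hcd Ck) pr1).
  fold F. rewrite (HK c), (HK d) by lra. ring.
Qed.

Lemma bound_int (h : R -> R) (u v M : R) (huv : u <= v)
  (HM : forall t, u < t < v -> Rabs (h t) <= M) (pr : Riemann_integrable h u v) :
  Rabs (RiemannInt pr) <= M * (v - u).
Proof.
  apply Rle_trans with (RiemannInt (RiemannInt_P16 pr)).
  - apply RiemannInt_P17; exact huv.
  - assert (Hb : 0 * (v - u) <= RiemannInt (RiemannInt_P16 pr) <= M * (v - u)).
    { apply RiemannInt_const_bound; [exact huv|].
      intros t Ht; split; [apply Rabs_pos | apply HM; exact Ht]. }
    apply Hb.
Qed.

Lemma mono_of_deriv (phi phi' : R -> R) (a b : R)
  (Hd : forall t, a <= t <= b -> derivable_pt_lim phi t (phi' t))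
  (Hpos : forall t, a < t < b -> 0 < phi' t) :
  forall x y, a <= x -> x < y -> y <= b -> phi x < phi y.
Proof.
  intros x y Hx Hxy Hy.
  destruct (MVT_cor2 phi phi' x y Hxy) as [c [Hc1 Hc2]].
  - intros c Hc; apply Hd; lra.
  - assert (0 < phi' c) by (apply Hpos; lra).
    assert (0 < phi' c * (y - x)) by (apply Rmult_lt_0_compat; lra). lra.
Qed.

Lemma cont_of_deriv (phi phi' : R -> R) t :
  derivable_pt_lim phi t (phi' t) -> continuity_pt phi t.
Proof.
  intro H. apply derivable_continuous_pt. exists (phi' t). exact H.
Qed.

Lemma improper_of_subst (f h phi phi' : R -> R) (a b a' b' : R) (hab' : a' < b')
  (Hd : forall t, a' <= t <= b' -> derivable_pt_lim phi t (phi' t))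
  (Hpos : forall t, a' < t < b' -> 0 < phi' t)
  (Ha : phi a' = a) (Hb : phi b' = b)
  (Hf : forall x, a < x < b -> continuity_pt f x)
  (Hh : forall t, a' <= t <= b' -> continuity_pt h t)
  (Heq : forall t, a' < t < b' -> h t = f (phi t) * phi' t)
  (pr : Riemann_integrable h a' b') :
  improper_integral f a b (RiemannInt pr).
Proof.
  pose proof (mono_of_deriv phi phi' a' b' Hd Hpos) as Mo.
  assert (hab : a < b) by (rewrite <- Ha, <- Hb; apply Mo; lra).
  split.
  { intros c d Hc Hcd Hd'. constructor. apply continuity_implies_RiemannInt; [exact Hcd|].
    intros x Hx; apply Hf; lra. }
  intros eps Heps.
  assert (Ca : forall t, a' <= t <= b' -> continuity_pt (fun t => Rabs (h t)) t).
  { intros t Ht. apply (continuity_pt_comp h Rabs). apply Hh; exact Ht.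
    apply Rcontinuity_abs. }
  destruct (continuity_ab_maj _ a' b' (Rlt_le _ _ hab') Ca) as [xM [HxM _]].
  set (M := Rabs (h xM)).
  assert (HM0 : 0 <= M) by apply Rabs_pos.
  set (eta := Rmin (eps / (2 * (M + 1))) ((b' - a') / 2)).
  assert (Heta0 : 0 < eta).
  { unfold eta. apply Rmin_pos; [|lra]. apply Rdiv_lt_0_compat; lra. }
  assert (Heta1 : eta <= (b' - a') / 2) by apply Rmin_r.
  assert (Heta2 : eta <= eps / (2 * (M + 1))) by apply Rmin_l.
  set (al := phi (a' + eta)). set (be := phi (b' - eta)).
  assert (Hal : a < al) by (unfold al; rewrite <- Ha; apply Mo; lra).
  assert (Hbe : be < b) by (unfold be; rewrite <- Hb; apply Mo; lra).
  assert (Halbe : al <= be).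
  { unfold al, be. destruct (Req_dec (a' + eta) (b' - eta)) as [E|E].
    rewrite E; lra. left; apply Mo; lra. }
  exists (Rmin (al - a) (b - be)). split.
  { apply Rmin_pos; lra. }
  intros c d prc Hc1 Hc2 Hd1 Hd2.
  assert (Hc3 : c < al) by (pose proof (Rmin_l (al - a) (b - be)); lra).
  assert (Hd3 : be < d) by (pose proof (Rmin_r (al - a) (b - be)); lra).
  assert (Cphi : forall t, a' <= t <= b' -> continuity_pt phi t).
  { intros t Ht; apply (cont_of_deriv phi phi'); apply Hd; exact Ht. }
  destruct (IVT_interv (fun t => phi t - c) a' (a' + eta)) as [c' [Hc' Ec]].
  { intros t Ht. apply continuity_pt_minus. apply Cphi; lra. apply continuity_pt_const; intros ? ?; reflexivity. }
  lra. simpl; lra. simpl; fold al; lra.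
  destruct (IVT_interv (fun t => phi t - d) (b' - eta) b') as [d' [Hd' Ed]].
  { intros t Ht. apply continuity_pt_minus. apply Cphi; lra. apply continuity_pt_const; intros ? ?; reflexivity. }
  lra. simpl; fold be; lra. simpl; lra.
  simpl in Ec, Ed.
  assert (Ec' : phi c' = c) by lra. assert (Ed' : phi d' = d) by lra.
  clear Ec Ed.
  assert (Hc'a : a' < c').
  { destruct (Req_dec c' a') as [E|E]; [|lra]. rewrite E, Ha in Ec'. lra. }
  assert (Hd'b : d' < b').
  { destruct (Req_dec d' b') as [E|E]; [|lra]. rewrite E, Hb in Ed'. lra. }
  subst c d.
  assert (Hcd' : c' <= d') by lra.
  assert (MoW : forall x y, a' <= x -> x <= y -> y <= b' -> phi x <= phi y).
  { intros x y Hx Hxy Hy. destruct (Req_dec x y) as [E|E]. rewrite E; lra. left; apply Mo; lra. }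
  assert (pr1 : Riemann_integrable h c' d').
  { apply continuity_implies_RiemannInt; [exact Hcd'|]. intros t Ht; apply Hh; lra. }
  assert (Hphic : phi c' <= phi d') by (apply MoW; lra).
  rewrite <- (CoV f h phi phi' c' d' (phi c') (phi d') Hcd' Hphic
    (fun x Hx => Hf x ltac:(lra)) (fun t Ht => Hh t ltac:(lra)) (fun t Ht => Hd t ltac:(lra))
    (fun t Ht => conj (MoW c' t ltac:(lra) ltac:(lra) ltac:(lra)) (MoW t d' ltac:(lra) ltac:(lra) ltac:(lra)))
    (fun t Ht => Heq t ltac:(lra)) pr1 prc).
  assert (prl : Riemann_integrable h a' c').
  { apply continuity_implies_RiemannInt; [lra|]. intros t Ht; apply Hh; lra. }
  assert (prr : Riemann_integrable h d' b').
  { apply continuity_implies_RiemannInt; [lra|]. intros t Ht; apply Hh; lra. }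
  assert (prm : Riemann_integrable h c' b').
  { apply continuity_implies_RiemannInt; [lra|]. intros t Ht; apply Hh; lra. }
  rewrite <- (RiemannInt_P26 prl prm pr).
  rewrite <- (RiemannInt_P26 pr1 prr prm).
  assert (Bd : forall t, a' < t < b' -> Rabs (h t) <= M).
  { intros t Ht. apply HxM. lra. }
  pose proof (bound_int h a' c' M ltac:(lra) (fun t Ht => Bd t ltac:(lra)) prl) as B1.
  pose proof (bound_int h d' b' M ltac:(lra) (fun t Ht => Bd t ltac:(lra)) prr) as B2.
  replace (RiemannInt pr1 - (RiemannInt prl + (RiemannInt pr1 + RiemannInt prr)))
    with (- (RiemannInt prl + RiemannInt prr)) by ring.
  rewrite Rabs_Ropp.
  apply Rle_lt_trans with (Rabs (RiemannInt prl) + Rabs (RiemannInt prr)); [apply Rabs_triang|].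
  assert (E1 : M * (c' - a') <= M * eta) by (apply Rmult_le_compat_l; lra).
  assert (E2 : M * (b' - d') <= M * eta) by (apply Rmult_le_compat_l; lra).
  assert (E3 : M * eta <= M * (eps / (2 * (M + 1)))) by (apply Rmult_le_compat_l; lra).
  assert (E4 : M * (eps / (2 * (M + 1))) < eps / 2).
  { replace (M * (eps / (2 * (M + 1)))) with ((eps / 2) * (M / (M + 1))) by (field; lra).
    rewrite <- (Rmult_1_r (eps / 2)) at 2. apply Rmult_lt_compat_l; [lra|].
    apply (Rmult_lt_reg_r (M + 1)); [lra|]. unfold Rdiv. rewrite Rmult_assoc, Rinv_l by lra. lra. }
  lra.
Qed.

Lemma RI_eq (f : R -> R) a1 b1 a2 b2 (pr1 : Riemann_integrable f a1 b1)
  (pr2 : Riemann_integrable f a2 b2) : a1 = a2 -> b1 = b2 -> RiemannInt pr1 = RiemannInt pr2.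
Proof. intros -> ->. apply RiemannInt_P5. Qed.

Lemma RI_ext (f g : R -> R) a b (pr1 : Riemann_integrable f a b)
  (pr2 : Riemann_integrable g a b) : a <= b -> (forall x, a <= x <= b -> f x = g x) ->
  RiemannInt pr1 = RiemannInt pr2.
Proof. intros Hab H. apply RiemannInt_P18; [exact Hab|]. intros; apply H; lra. Qed.

Lemma int_scal (f : R -> R) a b k (hab : a <= b) (pr1 : Riemann_integrable f a b)
  (pr2 : Riemann_integrable (fun x => k * f x) a b) : RiemannInt pr2 = k * RiemannInt pr1.
Proof.
  pose proof (RiemannInt_P13 (RiemannInt_P14 a b 0) pr1
     (RiemannInt_P10 k (RiemannInt_P14 a b 0) pr1)) as H.
  rewrite RiemannInt_P15 in H.
  rewrite <- (RI_ext _ _ _ _ (RiemannInt_P10 k (RiemannInt_P14 a b 0) pr1) pr2 hab).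
  rewrite H; ring. intros; unfold fct_cte; ring.
Qed.

Lemma int_lin (f g : R -> R) a b k (hab : a <= b) (pr1 : Riemann_integrable f a b)
  (pr2 : Riemann_integrable g a b)
  (pr3 : Riemann_integrable (fun x => f x + k * g x) a b) :
  RiemannInt pr3 = RiemannInt pr1 + k * RiemannInt pr2.
Proof. apply RiemannInt_P13. Qed.

Lemma FTC_simple (f F : R -> R) a b (hab : a <= b)
  (Cf : forall x, a <= x <= b -> continuity_pt f x)
  (HF : forall x, a <= x <= b -> derivable_pt_lim F x (f x))
  (pr : Riemann_integrable f a b) : RiemannInt pr = F b - F a.
Proof.
  assert (A1 : antiderivative f F a b).
  { split; [|exact hab]. intros t Ht.
    exists (exist _ (f t) (HF t Ht)). symmetry. apply derive_pt_eq_0. apply HF; exact Ht. }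
  assert (A2 := RiemannInt_P29 hab Cf).
  destruct (antiderivative_Ucte _ _ _ _ _ A1 A2) as [K HK].
  rewrite (RiemannInt_P20 hab (FTC_P1 hab Cf) pr).
  rewrite (HK a), (HK b) by lra. ring.
Qed.

Lemma reflect_int (q : R -> R) a b (hab : a <= b)
  (Cq : forall x, a <= x <= b -> continuity_pt q x)
  (pr1 : Riemann_integrable (fun t => q (a + b - t)) a b)
  (pr2 : Riemann_integrable q a b) : RiemannInt pr1 = RiemannInt pr2.
Proof.
  assert (Ck : forall t, a <= t <= b -> continuity_pt (fun t => -1 * q (a + b - t)) t).
  { intros t Ht. apply continuity_pt_mult. apply continuity_pt_const; intros ? ?; reflexivity.
    apply (continuity_pt_comp (fun t => a + b - t) q).
    apply continuity_pt_minus. apply continuity_pt_const; intros ? ?; reflexivity.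
    apply derivable_continuous_pt, derivable_pt_id.
    apply Cq; lra. }
  assert (prk : Riemann_integrable (fun t => -1 * q (a + b - t)) a b).
  { apply continuity_implies_RiemannInt; assumption. }
  assert (pr3 : Riemann_integrable q ((fun t => a + b - t) a) ((fun t => a + b - t) b)).
  { simpl. replace (a + b - a) with b by ring. replace (a + b - b) with a by ring.
    apply RiemannInt_P1; exact pr2. }
  pose proof (CoV q (fun t => -1 * q (a + b - t)) (fun t => a + b - t) (fun _ => -1) a b a b
     hab hab Cq Ck) as H.
  assert (E : RiemannInt prk = RiemannInt pr3).
  { apply H.
    - intros t Ht. replace (-1) with (0 - 1) by ring. apply derivable_pt_lim_minus.
      apply derivable_pt_lim_const. apply derivable_pt_lim_id.
    - intros; lra.
    - intros; ring. }
  rewrite (int_scal _ _ _ (-1) hab pr1 prk) in E.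
  rewrite (RiemannInt_P8 pr3 (RiemannInt_P1 pr3)) in E.
  rewrite (RI_eq _ _ _ _ _ (RiemannInt_P1 pr3) pr2) in E by ring.
  lra.
Qed.

Lemma antisym_int (q : R -> R) a b (hab : a <= b)
  (Cq : forall x, a <= x <= b -> continuity_pt q x)
  (Hq : forall x, a <= x <= b -> q (a + b - x) = - q x)
  (pr : Riemann_integrable q a b) : RiemannInt pr = 0.
Proof.
  assert (pr1 : Riemann_integrable (fun t => q (a + b - t)) a b).
  { refine (@Riemann_integrable_ext (fun x => -1 * q x) (fun t => q (a + b - t)) a b _
       (Riemann_integrable_scal (-1) pr)).
    intros x Hx. rewrite Rmin_left, Rmax_right in Hx by lra. rewrite Hq by lra. ring. }
  pose proof (reflect_int q a b hab Cq pr1 pr) as E.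
  assert (prs : Riemann_integrable (fun x => -1 * q x) a b) by (apply Riemann_integrable_scal; exact pr).
  rewrite (RI_ext _ _ _ _ pr1 prs hab) in E by (intros x Hx; rewrite Hq by lra; ring).
  rewrite (int_scal _ _ _ _ hab pr prs) in E. lra.
Qed.

Lemma improper_ext (f f' : R -> R) a b l (hab : a < b)
  (H : forall x, a < x < b -> f x = f' x) :
  improper_integral f a b l -> improper_integral f' a b l.
Proof.
  intros [H1 H2]. split.
  { intros c d Hc Hcd Hd. destruct (H1 c d Hc Hcd Hd) as [p]. constructor.
    refine (@Riemann_integrable_ext f f' c d _ p).
    intros x Hx. rewrite Rmin_left, Rmax_right in Hx by lra. apply H; lra. }
  intros eps Heps. destruct (H2 eps Heps) as [del [Hdel Hd]].
  exists (Rmin del ((b - a) / 2)). split. apply Rmin_pos; lra.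
  intros c d pr Hc1 Hc2 Hd1 Hd2.
  pose proof (Rmin_l del ((b - a) / 2)). pose proof (Rmin_r del ((b - a) / 2)).
  destruct (H1 c d ltac:(lra) ltac:(lra) ltac:(lra)) as [p].
  rewrite <- (RI_ext _ _ _ _ p pr ltac:(lra)) by (intros x Hx; apply H; lra).
  apply Hd; lra.
Qed.

Lemma improper_scal (f : R -> R) a b l k (hab : a < b) :
  improper_integral f a b l -> improper_integral (fun x => k * f x) a b (k * l).
Proof.
  intros [H1 H2]. split.
  { intros c d Hc Hcd Hd. destruct (H1 c d Hc Hcd Hd) as [p]. constructor.
    apply Riemann_integrable_scal; exact p. }
  intros eps Heps.
  assert (He : 0 < eps / (Rabs k + 1)).
  { apply Rdiv_lt_0_compat; [lra|]. pose proof (Rabs_pos k); lra. }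
  destruct (H2 _ He) as [del [Hdel Hd]].
  exists (Rmin del ((b - a) / 2)). split. apply Rmin_pos; lra.
  intros c d pr Hc1 Hc2 Hd1 Hd2.
  pose proof (Rmin_l del ((b - a) / 2)). pose proof (Rmin_r del ((b - a) / 2)).
  destruct (H1 c d ltac:(lra) ltac:(lra) ltac:(lra)) as [p].
  rewrite (int_scal f c d k ltac:(lra) p pr).
  replace (k * RiemannInt p - k * l) with (k * (RiemannInt p - l)) by ring.
  rewrite Rabs_mult.
  assert (Hb : Rabs (RiemannInt p - l) < eps / (Rabs k + 1)) by (apply Hd; lra).
  pose proof (Rabs_pos k). pose proof (Rabs_pos (RiemannInt p - l)).
  apply Rle_lt_trans with (Rabs k * (eps / (Rabs k + 1))).
  apply Rmult_le_compat_l; lra.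
  replace (Rabs k * (eps / (Rabs k + 1))) with (eps * (Rabs k / (Rabs k + 1))) by (field; lra).
  rewrite <- (Rmult_1_r eps) at 2. apply Rmult_lt_compat_l; [lra|].
  apply (Rmult_lt_reg_r (Rabs k + 1)); [lra|]. unfold Rdiv. rewrite Rmult_assoc, Rinv_l by lra. lra.
Qed.

Lemma improper_of_proper (f : R -> R) a b (hab : a < b)
  (Cf : forall x, a <= x <= b -> continuity_pt f x) (pr : Riemann_integrable f a b) :
  improper_integral f a b (RiemannInt pr).
Proof.
  apply (improper_of_subst f f (fun t => t) (fun _ => 1) a b a b hab).
  - intros; apply derivable_pt_lim_id.
  - intros; lra.
  - reflexivity.
  - reflexivity.
  - intros; apply Cf; lra.
  - exact Cf.
  - intros; ring.
Qed.

Lemma cont_local (f g : R -> R) x r : 0 < r ->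
  (forall t, Rabs (t - x) < r -> f t = g t) -> continuity_pt g x -> continuity_pt f x.
Proof.
  intros Hr Hfg Hg. unfold continuity_pt, continue_in, limit1_in, limit_in in *.
  intros eps Heps. destruct (Hg eps Heps) as [alp [Halp H]].
  exists (Rmin alp r). split. apply Rmin_pos; lra.
  intros t [Ht1 Ht2]. simpl in *. unfold R_dist in *.
  pose proof (Rmin_l alp r). pose proof (Rmin_r alp r).
  rewrite (Hfg t) by lra. rewrite (Hfg x) by (rewrite Rminus_diag, Rabs_R0; lra).
  apply H. split; [exact Ht1|]. simpl; unfold R_dist; lra.
Qed.

Lemma cont_rpow (u : R -> R) y x : continuity_pt u x -> 0 < u x ->
  continuity_pt (fun t => Rpower (u t) y) x.
Proof.
  intros Hu Hp. apply (continuity_pt_comp u (fun v => Rpower v y)); [exact Hu|].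
  apply derivable_continuous_pt. exists (y * Rpower (u x) (y - 1)).
  apply derivable_pt_lim_power; exact Hp.
Qed.

Lemma cont_ln (u : R -> R) x : continuity_pt u x -> 0 < u x ->
  continuity_pt (fun t => ln (u t)) x.
Proof.
  intros Hu Hp. apply (continuity_pt_comp u ln); [exact Hu|].
  apply derivable_continuous_pt. exists (/ u x).
  apply derivable_pt_lim_ln; exact Hp.
Qed.

Definition rp (x y : R) : R := if Rlt_dec 0 x then Rpower x y else 0.

Lemma rp_pos x y : 0 < x -> rp x y = Rpower x y.
Proof. intro H. unfold rp. destruct (Rlt_dec 0 x); [reflexivity|contradiction]. Qed.

Lemma rp_npos x y : x <= 0 -> rp x y = 0.
Proof. intro H. unfold rp. destruct (Rlt_dec 0 x); [lra|reflexivity]. Qed.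

Lemma rp_cont y x : 0 < y -> continuity_pt (fun t => rp t y) x.
Proof.
  intro Hy. destruct (Rtotal_order x 0) as [Hx|[Hx|Hx]].
  - apply (cont_local _ (fun _ => 0) x (- x)); [lra| |].
    intros t Ht. apply rp_npos. apply Rabs_def2 in Ht. lra.
    apply continuity_pt_const; intros ? ?; reflexivity.
  - subst x. unfold continuity_pt, continue_in, limit1_in, limit_in.
    intros eps Heps. exists (Rpower eps (/ y)). split. unfold Rpower; apply exp_pos.
    intros t [_ Ht]. simpl in *. unfold R_dist in *. rewrite Rminus_0_r in Ht.
    rewrite (rp_npos 0) by lra. rewrite Rminus_0_r.
    destruct (Rle_dec t 0) as [Ht0|Ht0].
    + rewrite rp_npos by lra. rewrite Rabs_R0; exact Heps.
    + rewrite rp_pos by lra. rewrite Rabs_right by (left; unfold Rpower; apply exp_pos).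
      replace eps with (Rpower (Rpower eps (/ y)) y).
      apply Rlt_Rpower_l; [exact Hy|]. split; [lra|]. apply Rabs_def2 in Ht; lra.
      rewrite Rpower_mult, Rinv_l by lra. apply Rpower_1; exact Heps.
  - apply (cont_local _ (fun t => Rpower t y) x x); [lra| |].
    intros t Ht. apply rp_pos. apply Rabs_def2 in Ht. lra.
    apply (cont_rpow (fun t => t)); [apply derivable_continuous_pt, derivable_pt_id | exact Hx].
Qed.

Lemma cont_const c x : continuity_pt (fun _ => c) x.
Proof. apply continuity_pt_const; intros ? ?; reflexivity. Qed.

Lemma cont_id x : continuity_pt (fun t => t) x.
Proof. apply derivable_continuous_pt, derivable_pt_id. Qed.

Lemma cont_sin x : continuity_pt sin x.
Proof. apply continuity_sin. Qed.

Lemma cont_cos x : continuity_pt cos x.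
Proof. apply continuity_cos. Qed.

Lemma dlim_eq f x l l' : derivable_pt_lim f x l -> l = l' -> derivable_pt_lim f x l'.
Proof. intros H ->; exact H. Qed.

Lemma ln4 : ln 4 = 2 * ln 2.
Proof. replace 4 with (2 * 2) by ring. rewrite ln_mult by lra. ring. Qed.

Lemma Rpower_pos x y : 0 < Rpower x y.
Proof. unfold Rpower; apply exp_pos. Qed.

Lemma ln_sq x : 0 < x -> ln (x ^ 2) = 2 * ln x.
Proof. intro H. replace (x ^ 2) with (x * x) by ring. rewrite ln_mult by lra. ring. Qed.

Lemma rpow_id1 lam s : 0 < s ->
  Rpower 4 lam * Rpower s (2 * lam) = Rpower (4 * s ^ 2) (lam - 1 / 2) * (2 * s).
Proof.
  intro Hs. assert (0 < s ^ 2) by nra.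
  apply ln_inv. apply Rmult_lt_0_compat; apply Rpower_pos.
  apply Rmult_lt_0_compat. apply Rpower_pos. lra.
  rewrite !ln_mult by (try apply Rpower_pos; lra).
  rewrite !ln_Rpower. rewrite ln_mult by lra. rewrite ln_sq by lra. rewrite ln4. field.
Qed.

Definition hC (lam t : R) : R := Rpower 4 lam * rp (sin t) (2 * lam).
Definition fC (lam x : R) : R := Rpower (4 - x ^ 2) (lam - 1 / 2).

Lemma hC_cont lam t : 0 < lam -> continuity_pt (hC lam) t.
Proof.
  intro Hl. unfold hC. apply continuity_pt_mult. apply cont_const.
  apply (continuity_pt_comp sin (fun u => rp u (2 * lam))). apply cont_sin.
  apply rp_cont; lra.
Qed.

Lemma dphi0 t : derivable_pt_lim (fun t => -2 * cos t) t (2 * sin t).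
Proof.
  apply (dlim_eq _ _ (-2 * (- sin t))).
  apply (derivable_pt_lim_scal cos (-2) t). apply derivable_pt_lim_cos. ring.
Qed.

Lemma C_part lam (Hl : 0 < lam) (pr : Riemann_integrable (hC lam) 0 PI) :
  improper_integral (fC lam) (-2) 2 (RiemannInt pr).
Proof.
  apply (improper_of_subst (fC lam) (hC lam) (fun t => -2 * cos t) (fun t => 2 * sin t)
    (-2) 2 0 PI PI_RGT_0).
  - intros; apply dphi0.
  - intros t Ht. pose proof (sin_gt_0 t (proj1 Ht) (proj2 Ht)). lra.
  - rewrite cos_0; ring.
  - rewrite cos_PI; ring.
  - intros x Hx. unfold fC. apply (cont_rpow (fun x => 4 - x ^ 2)).
    apply continuity_pt_minus. apply cont_const. apply continuity_pt_mult. apply cont_id.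
    apply continuity_pt_mult. apply cont_id. apply cont_const. nra.
  - intros; apply hC_cont; exact Hl.
  - intros t Ht. pose proof (sin_gt_0 t (proj1 Ht) (proj2 Ht)).
    unfold hC, fC. rewrite rp_pos by lra.
    replace (4 - (-2 * cos t) ^ 2) with (4 * sin t ^ 2).
    apply rpow_id1; lra.
    pose proof (sin2_cos2 t). unfold Rsqr in *. nra.
Qed.

Definition Sg (g t : R) : R := sqrt (1 - g ^ 2 * (sin t * sin t)).
Definition phiI (g t : R) : R := 2 * g * (sin t * sin t) - 2 * Sg g t * cos t.
Definition phiI' (g t : R) : R := 2 * sin t * (Sg g t + g * cos t) ^ 2 / Sg g t.
Definition qI (lam g t : R) : R := rp (sin t) (2 * lam) * cos t / Sg g t.
Definition hI (lam g t : R) : R :=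
  Rpower g lam * hC lam t + (Rpower g lam * Rpower 4 lam * g) * qI lam g t.
Definition fI (lam z x : R) : R := Rpower (4 - x ^ 2) (lam - 1 / 2) / Rpower (z - x) lam.

Lemma sin_cos_sq t : sin t * sin t + cos t * cos t = 1.
Proof. pose proof (sin2_cos2 t). unfold Rsqr in H. lra. Qed.

Lemma Sg_arg_pos g t : 0 <= g < 1 -> 0 < 1 - g ^ 2 * (sin t * sin t).
Proof.
  intro Hg. pose proof (sin_cos_sq t).
  assert (0 <= cos t * cos t) by nra. assert (g ^ 2 < 1) by nra.
  assert (0 <= sin t * sin t <= 1) by nra. nra.
Qed.

Lemma Sg_pos g t : 0 <= g < 1 -> 0 < Sg g t.
Proof. intro. apply sqrt_lt_R0, Sg_arg_pos; assumption. Qed.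

Lemma Sg_sq g t : 0 <= g < 1 -> Sg g t * Sg g t = 1 - g ^ 2 * (sin t * sin t).
Proof. intro. apply sqrt_sqrt. left; apply Sg_arg_pos; assumption. Qed.

Lemma rho_pos g t : 0 <= g < 1 -> 0 < Sg g t + g * cos t.
Proof.
  intro Hg. pose proof (Sg_pos g t Hg). pose proof (Sg_sq g t Hg). pose proof (sin_cos_sq t).
  assert (Sg g t * Sg g t > (g * cos t) * (g * cos t)).
  { assert (0 <= sin t * sin t) by nra. assert (g ^ 2 < 1) by nra.
    replace ((g * cos t) * (g * cos t)) with (g ^ 2 * (cos t * cos t)) by ring.
    rewrite H0. nra. }
  destruct (Rle_dec 0 (g * cos t)); nra.
Qed.

Lemma Sg_cont g t : 0 <= g < 1 -> continuity_pt (Sg g) t.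
Proof.
  intro Hg. unfold Sg.
  apply (continuity_pt_comp (fun t => 1 - g ^ 2 * (sin t * sin t)) sqrt).
  apply continuity_pt_minus. apply cont_const. apply continuity_pt_mult. apply cont_const.
  apply continuity_pt_mult; apply cont_sin.
  apply continuity_pt_sqrt. left; apply Sg_arg_pos; exact Hg.
Qed.

Lemma Sg_deriv g t : 0 <= g < 1 ->
  derivable_pt_lim (Sg g) t (- g ^ 2 * sin t * cos t / Sg g t).
Proof.
  intro Hg. unfold Sg.
  apply (dlim_eq _ _ (/ (2 * sqrt (1 - g ^ 2 * (sin t * sin t))) *
                      (0 - g ^ 2 * (cos t * sin t + sin t * cos t)))).
  - apply (derivable_pt_lim_comp (fun t => 1 - g ^ 2 * (sin t * sin t)) sqrt).
    + apply derivable_pt_lim_minus. apply derivable_pt_lim_const.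
      apply (dlim_eq _ _ (0 * (sin t * sin t) + g ^ 2 * (cos t * sin t + sin t * cos t))).
      apply (derivable_pt_lim_mult (fun _ => g ^ 2) (fun t => sin t * sin t)).
      apply derivable_pt_lim_const.
      apply (derivable_pt_lim_mult sin sin); apply derivable_pt_lim_sin.
      ring.
    + apply derivable_pt_lim_sqrt. apply Sg_arg_pos; exact Hg.
  - fold (Sg g t). pose proof (Sg_pos g t Hg). field. lra.
Qed.

Lemma phiI_deriv g t : 0 <= g < 1 -> derivable_pt_lim (phiI g) t (phiI' g t).
Proof.
  intro Hg. unfold phiI.
  apply (dlim_eq _ _ (2 * g * (cos t * sin t + sin t * cos t) -
     (2 * (- g ^ 2 * sin t * cos t / Sg g t) * cos t + 2 * Sg g t * (- sin t)))).
  - apply (derivable_pt_lim_minus (fun t => 2 * g * (sin t * sin t)) (fun t => 2 * Sg g t * cos t)).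
    + apply (derivable_pt_lim_scal (fun t => sin t * sin t) (2 * g)).
      apply (derivable_pt_lim_mult sin sin); apply derivable_pt_lim_sin.
    + apply (dlim_eq _ _ ((2 * (- g ^ 2 * sin t * cos t / Sg g t)) * cos t + (2 * Sg g t) * (- sin t))).
      apply (derivable_pt_lim_mult (fun t => 2 * Sg g t) cos).
      apply (derivable_pt_lim_scal (Sg g) 2). apply Sg_deriv; exact Hg.
      apply derivable_pt_lim_cos. ring.
  - unfold phiI'. pose proof (Sg_pos g t Hg). pose proof (Sg_sq g t Hg).
    pose proof (sin_cos_sq t).
    field. lra.
Qed.

Ltac pos := repeat (first [ apply Rmult_lt_0_compat | apply Rinv_0_lt_compat
  | apply Rdiv_lt_0_compat | apply Rpower_pos | apply exp_pos | lra | nra ]).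

Lemma rpow_id2 lam g s c S : 0 < g -> 0 < s -> 0 < S -> 0 < S + g * c ->
  Rpower g lam * (Rpower 4 lam * Rpower s (2 * lam)) +
  Rpower g lam * Rpower 4 lam * g * (Rpower s (2 * lam) * c / S)
  = Rpower (4 * s ^ 2 * (S + g * c) ^ 2) (lam - 1 / 2) / Rpower ((S + g * c) ^ 2 / g) lam
    * (2 * s * (S + g * c) ^ 2 / S).
Proof.
  intros Hg Hs HS Hr. set (r := S + g * c) in *.
  transitivity (Rpower g lam * Rpower 4 lam * Rpower s (2 * lam) * (r / S)).
  { unfold r. field. lra. }
  assert (0 < s ^ 2) by nra. assert (0 < r ^ 2) by nra.
  assert (0 < r ^ 2 / g) by (apply Rdiv_lt_0_compat; lra).
  assert (0 < 4 * s ^ 2) by lra. assert (0 < 4 * s ^ 2 * r ^ 2) by nra.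
  apply ln_inv; [pos|pos|].
  unfold Rdiv.
  rewrite !ln_mult by pos. rewrite !ln_Rinv by pos. rewrite !ln_Rpower.
  rewrite !ln_mult by pos. rewrite !ln_Rinv by pos. rewrite !ln_sq by pos. rewrite ln4. field.
Qed.

Lemma qI_cont lam g t : 0 < lam -> 0 <= g < 1 -> continuity_pt (qI lam g) t.
Proof.
  intros Hl Hg. unfold qI. apply continuity_pt_div.
  apply continuity_pt_mult.
  apply (continuity_pt_comp sin (fun u => rp u (2 * lam))). apply cont_sin. apply rp_cont; lra.
  apply cont_cos. apply Sg_cont; exact Hg. pose proof (Sg_pos g t Hg); lra.
Qed.

Lemma hI_cont lam g t : 0 < lam -> 0 <= g < 1 -> continuity_pt (hI lam g) t.
Proof.
  intros Hl Hg. unfold hI. apply continuity_pt_plus.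
  apply continuity_pt_mult. apply cont_const. apply hC_cont; exact Hl.
  apply continuity_pt_mult. apply cont_const. apply qI_cont; assumption.
Qed.

Lemma Sg_0 g : Sg g 0 = 1.
Proof. unfold Sg. rewrite sin_0. replace (1 - g ^ 2 * (0 * 0)) with 1 by ring. apply sqrt_1. Qed.

Lemma Sg_PI g : Sg g PI = 1.
Proof. unfold Sg. rewrite sin_PI. replace (1 - g ^ 2 * (0 * 0)) with 1 by ring. apply sqrt_1. Qed.

Lemma I_part lam z g (Hl : 0 < lam) (Hg : 0 < g < 1) (Hz : g * z = 1 + g ^ 2)
  (pr : Riemann_integrable (hI lam g) 0 PI) :
  improper_integral (fI lam z) (-2) 2 (RiemannInt pr).
Proof.
  assert (Hg' : 0 <= g < 1) by lra.
  assert (Hz2 : 2 < z).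
  { assert (g * 2 < g * z) by nra. nra. }
  apply (improper_of_subst (fI lam z) (hI lam g) (phiI g) (phiI' g) (-2) 2 0 PI PI_RGT_0).
  - intros; apply phiI_deriv; exact Hg'.
  - intros t Ht. pose proof (sin_gt_0 t (proj1 Ht) (proj2 Ht)).
    pose proof (Sg_pos g t Hg'). pose proof (rho_pos g t Hg'). unfold phiI'. pos.
  - unfold phiI. rewrite Sg_0, sin_0, cos_0. ring.
  - unfold phiI. rewrite Sg_PI, sin_PI, cos_PI. ring.
  - intros x Hx. unfold fI. apply continuity_pt_div.
    + apply (cont_rpow (fun x => 4 - x ^ 2)).
      apply continuity_pt_minus. apply cont_const. apply continuity_pt_mult. apply cont_id.
      apply continuity_pt_mult. apply cont_id. apply cont_const. nra.
    + apply (cont_rpow (fun x => z - x)).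
      apply continuity_pt_minus. apply cont_const. apply cont_id. lra.
    + pose proof (Rpower_pos (z - x) lam). lra.
  - intros; apply hI_cont; assumption.
  - intros t Ht. pose proof (sin_gt_0 t (proj1 Ht) (proj2 Ht)).
    pose proof (Sg_pos g t Hg'). pose proof (rho_pos g t Hg').
    pose proof (Sg_sq g t Hg'). pose proof (sin_cos_sq t).
    unfold hI, hC, qI, fI, phiI'. rewrite rp_pos by lra.
    replace (4 - phiI g t ^ 2) with (4 * sin t ^ 2 * (Sg g t + g * cos t) ^ 2).
    replace (z - phiI g t) with ((Sg g t + g * cos t) ^ 2 / g).
    apply rpow_id2; lra.
    + unfold phiI. apply (Rmult_eq_reg_l g); [|lra]. field_simplify; [|lra].
      set (S := Sg g t) in *. set (s := sin t) in *. set (c := cos t) in *.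
      replace (S ^ 2) with (S * S) by ring. rewrite H2.
      replace (g * z) with (1 + g ^ 2) by lra. 
      replace (c ^ 2) with (c * c) by ring. replace (c * c) with (1 - s * s) by lra. ring.
    + unfold phiI.
      set (S := Sg g t) in *. set (s := sin t) in *. set (c := cos t) in *.
      replace ((S + g * c) ^ 2) with (S * S + 2 * g * c * S + g ^ 2 * (c * c)) by ring.
      replace ((2 * g * (s * s) - 2 * S * c) ^ 2) with
        (4 * g ^ 2 * (s * s) * (s * s) - 8 * g * (s * s) * S * c + 4 * (S * S) * (c * c)) by ring.
      rewrite H2. replace (c * c) with (1 - s * s) by lra. ring.
Qed.

Lemma I_value lam g (Hl : 0 < lam) (Hg : 0 < g < 1)
  (prI : Riemann_integrable (hI lam g) 0 PI) (prC : Riemann_integrable (hC lam) 0 PI) :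
  RiemannInt prI = Rpower g lam * RiemannInt prC.
Proof.
  assert (Hg' : 0 <= g < 1) by lra.
  assert (HPI := PI_RGT_0).
  assert (prq : Riemann_integrable (qI lam g) 0 PI).
  { apply continuity_implies_RiemannInt; [lra|]. intros; apply qI_cont; assumption. }
  assert (prs : Riemann_integrable (fun t => Rpower g lam * hC lam t) 0 PI).
  { apply Riemann_integrable_scal; exact prC. }
  transitivity (RiemannInt prs + (Rpower g lam * Rpower 4 lam * g) * RiemannInt prq).
  { apply (int_lin (fun t => Rpower g lam * hC lam t) (qI lam g) 0 PI
    (Rpower g lam * Rpower 4 lam * g) ltac:(lra) prs prq prI). }
  rewrite (int_scal _ 0 PI (Rpower g lam) ltac:(lra) prC prs).
  rewrite (antisym_int (qI lam g) 0 PI ltac:(lra)). ring.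
  - intros; apply qI_cont; assumption.
  - intros x Hx. unfold qI. replace (0 + PI - x) with (PI - x) by ring.
    unfold Sg. rewrite sin_PI_x, cos_minus, cos_PI, sin_PI. field. fold (Sg g x).
    pose proof (Sg_pos g x Hg'). lra.
Qed.

Lemma G_facts z : 2 < z -> 0 < G z < 1 /\ G z * z = 1 + G z ^ 2.
Proof.
  intro Hz. unfold G.
  assert (H0 : 0 < z ^ 2 - 4) by nra.
  pose proof (sqrt_lt_R0 _ H0) as Hs.
  pose proof (sqrt_sqrt _ (Rlt_le _ _ H0)) as Hss.
  set (s := sqrt (z ^ 2 - 4)) in *.
  assert (s < z) by nra.
  assert (z - 2 < s) by nra.
  split; [split|]; [lra|lra|]. field_simplify. nra.
Qed.

Lemma hC1_val (pr : Riemann_integrable (hC 1) 0 PI) : RiemannInt pr = 2 * PI.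
Proof.
  assert (HPI := PI_RGT_0).
  assert (pr2 : Riemann_integrable (fun t => 4 * (sin t * sin t)) 0 PI).
  { apply continuity_implies_RiemannInt; [lra|]. intros x _.
    apply continuity_pt_mult. apply cont_const. apply continuity_pt_mult; apply cont_sin. }
  rewrite (RI_ext _ _ _ _ pr pr2).
  - rewrite (FTC_simple _ (fun t => 2 * (t - sin t * cos t)) 0 PI ltac:(lra)).
    + rewrite sin_0, sin_PI. ring.
    + intros x _. apply continuity_pt_mult. apply cont_const. apply continuity_pt_mult; apply cont_sin.
    + intros x _.
      apply (dlim_eq _ _ (2 * (1 - (cos x * cos x + sin x * (- sin x))))).
      apply (derivable_pt_lim_scal (fun t => t - sin t * cos t) 2).
      apply derivable_pt_lim_minus. apply derivable_pt_lim_id.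
      apply (derivable_pt_lim_mult sin cos). apply derivable_pt_lim_sin. apply derivable_pt_lim_cos.
      pose proof (sin_cos_sq x). lra.
  - lra.
  - intros x Hx. unfold hC. rewrite Rpower_1 by lra.
    destruct (Req_dec (sin x) 0) as [E|E].
    + rewrite rp_npos by lra. rewrite E. ring.
    + assert (0 < sin x).
      { assert (0 <= sin x) by (apply sin_ge_0; lra). lra. }
      rewrite rp_pos by lra. replace (2 * 1) with (INR 2) by (simpl; ring).
      rewrite Rpower_pow by lra. simpl. ring.
Qed.

Lemma Gint_part z (Hz : 2 < z) :
  improper_integral (fun x => / (z - x) * (sqrt (4 - x ^ 2) / (2 * PI))) (-2) 2 (G z).
Proof.
  destruct (G_facts z Hz) as [Hg Hgz].
  assert (HPI := PI_RGT_0).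
  assert (prC : Riemann_integrable (hC 1) 0 PI).
  { apply continuity_implies_RiemannInt; [lra|]. intros; apply hC_cont; lra. }
  assert (prI : Riemann_integrable (hI 1 (G z)) 0 PI).
  { apply continuity_implies_RiemannInt; [lra|]. intros; apply hI_cont; lra. }
  pose proof (I_part 1 z (G z) ltac:(lra) Hg Hgz prI) as HI.
  rewrite (I_value 1 (G z) ltac:(lra) Hg prI prC), hC1_val, Rpower_1 in HI by lra.
  apply (improper_scal (fI 1 z) (-2) 2 _ (/ (2 * PI))) in HI; [|lra].
  replace (/ (2 * PI) * (G z * (2 * PI))) with (G z) in HI by (field; lra).
  apply (improper_ext _ (fun x => / (z - x) * (sqrt (4 - x ^ 2) / (2 * PI))) (-2) 2) in HI; [exact HI|lra|].
  intros x Hx. unfold fI. replace (1 - 1 / 2) with (/ 2) by field.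
  rewrite Rpower_sqrt by nra. rewrite Rpower_1 by lra. field. split; lra.
Qed.

Definition L (h t : R) : R := ln (1 - 2 * h * cos t + h ^ 2).

Lemma cos_bound t : -1 <= cos t <= 1.
Proof. pose proof (sin_cos_sq t). split; nra. Qed.

Lemma L_arg_lb h t : (1 - Rabs h) ^ 2 <= 1 - 2 * h * cos t + h ^ 2.
Proof.
  pose proof (cos_bound t).
  destruct (Rle_dec 0 h).
  - rewrite Rabs_right by lra. nra.
  - rewrite Rabs_left by lra. nra.
Qed.

Lemma L_arg_ub h t : 1 - 2 * h * cos t + h ^ 2 <= (1 + Rabs h) ^ 2.
Proof.
  pose proof (cos_bound t).
  destruct (Rle_dec 0 h).
  - rewrite Rabs_right by lra. nra.
  - rewrite Rabs_left by lra. nra.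
Qed.

Lemma L_arg_pos h t : Rabs h < 1 -> 0 < 1 - 2 * h * cos t + h ^ 2.
Proof. intro H. pose proof (L_arg_lb h t). nra. Qed.

Lemma L_cont h t : Rabs h < 1 -> continuity_pt (L h) t.
Proof.
  intro H. unfold L. apply (cont_ln (fun t => 1 - 2 * h * cos t + h ^ 2)).
  apply continuity_pt_plus. apply continuity_pt_minus. apply cont_const.
  apply continuity_pt_mult. apply cont_const. apply cont_cos. apply cont_const.
  apply L_arg_pos; exact H.
Qed.

Lemma Lint h : Rabs h < 1 -> Riemann_integrable (L h) 0 PI.
Proof.
  intro H. apply continuity_implies_RiemannInt. left; apply PI_RGT_0.
  intros; apply L_cont; exact H.
Qed.

Lemma P_sym h (H : Rabs h < 1) (pr1 : Riemann_integrable (L h) 0 PI)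
  (pr2 : Riemann_integrable (L (- h)) 0 PI) : RiemannInt pr1 = RiemannInt pr2.
Proof.
  assert (HPI := PI_RGT_0).
  assert (pr3 : Riemann_integrable (fun t => L h (0 + PI - t)) 0 PI).
  { apply continuity_implies_RiemannInt; [lra|]. intros x _.
    apply (continuity_pt_comp (fun t => 0 + PI - t) (L h)).
    apply continuity_pt_minus. apply cont_const. apply cont_id. apply L_cont; exact H. }
  rewrite <- (reflect_int (L h) 0 PI ltac:(lra) (fun x _ => L_cont h x H) pr3 pr1).
  apply RI_ext; [lra|]. intros x _. unfold L.
  replace (0 + PI - x) with (PI - x) by ring. rewrite cos_minus, cos_PI, sin_PI. f_equal. ring.
Qed.

Lemma ln_le' x y : 0 < x -> x <= y -> ln x <= ln y.
Proof. intros Hx Hxy. destruct Hxy as [H|H]. left; apply ln_increasing; lra. rewrite H; lra. Qed.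

Lemma P_bound g h (Hg : 0 < g < 1) (Hh : Rabs h <= g) (pr : Riemann_integrable (L h) 0 PI) :
  Rabs (RiemannInt pr) <= (2 * ln 2 - 2 * ln (1 - g)) * PI.
Proof.
  assert (HPI := PI_RGT_0).
  replace ((2 * ln 2 - 2 * ln (1 - g)) * PI) with ((2 * ln 2 - 2 * ln (1 - g)) * (PI - 0)) by ring.
  apply bound_int; [lra|]. intros t _. unfold L.
  assert (ln (1 - g) < 0) by (rewrite <- ln_1; apply ln_increasing; lra).
  assert (0 < ln 2) by (rewrite <- ln_1; apply ln_increasing; lra).
  pose proof (L_arg_lb h t). pose proof (L_arg_ub h t).
  assert (A1 : (1 - g) ^ 2 <= 1 - 2 * h * cos t + h ^ 2).
  { assert ((1 - g) ^ 2 <= (1 - Rabs h) ^ 2) by (pose proof (Rabs_pos h); nra). lra. }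
  assert (A2 : 1 - 2 * h * cos t + h ^ 2 <= 4).
  { assert ((1 + Rabs h) ^ 2 <= 4) by (pose proof (Rabs_pos h); nra). lra. }
  assert (0 < (1 - g) ^ 2) by nra. pose proof (ln_le' ((1 - g) ^ 2) _ ltac:(assumption) A1) as B1.
  pose proof (ln_le' (1 - 2 * h * cos t + h ^ 2) 4 ltac:(lra) A2) as B2.
  rewrite ln_sq in B1 by lra. rewrite ln4 in B2.
  apply Rabs_le. split; lra.
Qed.

Lemma abs_sq_lt1 h : Rabs h < 1 -> Rabs (h ^ 2) < 1.
Proof.
  intro H. rewrite Rabs_right by nra. pose proof (Rabs_pos h).
  replace (h ^ 2) with (Rabs h * Rabs h). nra.
  rewrite <- Rabs_mult. rewrite Rabs_right by nra. ring.
Qed.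

Lemma ic (f : R -> R) a b : a <= b -> (forall x, a <= x <= b -> continuity_pt f x) ->
  Riemann_integrable f a b.
Proof. apply continuity_implies_RiemannInt. Qed.

Lemma P_double h (H : Rabs h < 1) (pr1 : Riemann_integrable (L h) 0 PI)
  (pr2 : Riemann_integrable (L (h ^ 2)) 0 PI) : 2 * RiemannInt pr1 = RiemannInt pr2.
Proof.
  assert (HPI := PI_RGT_0).
  assert (Hm : Rabs (- h) < 1) by (rewrite Rabs_Ropp; exact H).
  assert (H2 := abs_sq_lt1 h H).
  assert (H2m : Rabs (- h ^ 2) < 1) by (rewrite Rabs_Ropp; exact H2).
  pose proof (Lint (- h) Hm) as prm.
  rewrite (P_sym h H pr1 prm).
  set (D := fun t => L (h ^ 2) (2 * t)).
  assert (CD : forall t, continuity_pt D t).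
  { intro t. unfold D. apply (continuity_pt_comp (fun t => 2 * t) (L (h ^ 2))).
    apply continuity_pt_mult. apply cont_const. apply cont_id. apply L_cont; exact H2. }
  assert (prD : Riemann_integrable D 0 PI) by (apply ic; [lra|]; intros; apply CD).
  assert (E1 : RiemannInt pr1 + 1 * RiemannInt prm = RiemannInt prD).
  { assert (prs : Riemann_integrable (fun t => L h t + 1 * L (- h) t) 0 PI).
    { apply ic; [lra|]. intros. apply continuity_pt_plus. apply L_cont; exact H.
      apply continuity_pt_mult. apply cont_const. apply L_cont; exact Hm. }
    rewrite <- (int_lin (L h) (L (- h)) 0 PI 1 ltac:(lra) pr1 prm prs).
    apply RI_ext; [lra|]. intros t _. unfold D, L.
    rewrite Rmult_1_l. rewrite <- ln_mult by (apply L_arg_pos; assumption).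
    f_equal. rewrite cos_2a_cos. ring. }
  rewrite (P_sym h H pr1 prm) in E1.
  assert (pr2pi : Riemann_integrable (L (h ^ 2)) (2 * 0) (2 * PI)).
  { apply ic; [lra|]. intros; apply L_cont; exact H2. }
  assert (prk : Riemann_integrable (fun t => 2 * D t) 0 PI).
  { apply Riemann_integrable_scal; exact prD. }
  assert (E2 : RiemannInt prk = RiemannInt pr2pi).
  { apply (CoV (L (h ^ 2)) (fun t => 2 * D t) (fun t => 2 * t) (fun _ => 2) 0 PI 0 (2 * PI)
      ltac:(lra) ltac:(lra)).
    - intros; apply L_cont; exact H2.
    - intros; apply continuity_pt_mult. apply cont_const. apply CD.
    - intros t _. apply (dlim_eq _ _ (2 * 1)). apply (derivable_pt_lim_scal (fun t => t) 2).
      apply derivable_pt_lim_id. ring.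
    - intros; lra.
    - intros; unfold D; ring. }
  rewrite (int_scal D 0 PI 2 ltac:(lra) prD prk) in E2.
  assert (pra : Riemann_integrable (L (h ^ 2)) 0 PI) by (apply ic; [lra|]; intros; apply L_cont; exact H2).
  assert (prb : Riemann_integrable (L (h ^ 2)) PI (2 * PI)) by (apply ic; [lra|]; intros; apply L_cont; exact H2).
  assert (pr02 : Riemann_integrable (L (h ^ 2)) 0 (2 * PI)) by (apply ic; [lra|]; intros; apply L_cont; exact H2).
  rewrite (RI_eq _ _ _ _ _ pr2pi pr02) in E2 by ring.
  rewrite <- (RiemannInt_P26 pra prb pr02) in E2.
  assert (prsh : Riemann_integrable (fun t => L (h ^ 2) (t + PI) * 1) 0 PI).
  { apply ic; [lra|]. intros. apply continuity_pt_mult; [|apply cont_const].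
    apply (continuity_pt_comp (fun t => t + PI) (L (h ^ 2))).
    apply continuity_pt_plus. apply cont_id. apply cont_const. apply L_cont; exact H2. }
  assert (prb' : Riemann_integrable (L (h ^ 2)) (0 + PI) (PI + PI)) by (apply ic; [lra|]; intros; apply L_cont; exact H2).
  assert (E3 : RiemannInt prsh = RiemannInt prb').
  { apply (CoV (L (h ^ 2)) (fun t => L (h ^ 2) (t + PI) * 1) (fun t => t + PI) (fun _ => 1) 0 PI PI (2 * PI)
      ltac:(lra) ltac:(lra)).
    - intros; apply L_cont; exact H2.
    - intros. apply continuity_pt_mult; [|apply cont_const].
      apply (continuity_pt_comp (fun t => t + PI) (L (h ^ 2))).
      apply continuity_pt_plus. apply cont_id. apply cont_const. apply L_cont; exact H2.
    - intros t _. apply (dlim_eq _ _ (1 + 0)). apply derivable_pt_lim_plus.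
      apply derivable_pt_lim_id. apply derivable_pt_lim_const. ring.
    - intros; lra.
    - intros; ring. }
  rewrite (RI_eq _ _ _ _ _ prb' prb) in E3 by ring.
  assert (prm2 : Riemann_integrable (L (- h ^ 2)) 0 PI) by (apply Lint; exact H2m).
  assert (E4 : RiemannInt prsh = RiemannInt prm2).
  { apply RI_ext; [lra|]. intros t _. unfold L. rewrite Rmult_1_r, neg_cos. f_equal. ring. }
  rewrite <- (P_sym (h ^ 2) H2 pra prm2) in E4.
  rewrite (RiemannInt_P5 pr2 pra).
  lra.
Qed.

Fixpoint useq (g : R) (n : nat) : R := match n with O => g | S n => useq g n ^ 2 end.

Lemma useq_bd g n : 0 < g < 1 -> 0 < useq g n <= g.
Proof.
  intro Hg. induction n as [|n IH]; simpl. lra. nra.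
Qed.

Lemma pow2_ge n : INR n <= 2 ^ n.
Proof.
  induction n as [|n IH]. simpl; lra.
  rewrite S_INR. simpl. assert (1 <= 2 ^ n) by (apply pow_R1_Rle; lra). lra.
Qed.

Lemma P_zero g (Hg : 0 < g < 1) (pr : Riemann_integrable (L g) 0 PI) : RiemannInt pr = 0.
Proof.
  assert (Hu : forall n, Rabs (useq g n) < 1).
  { intro n. pose proof (useq_bd g n Hg). rewrite Rabs_right; lra. }
  assert (Hind : forall n (p : Riemann_integrable (L (useq g n)) 0 PI), RiemannInt p = 2 ^ n * RiemannInt pr).
  { induction n as [|n IH]; intros p.
    - simpl. rewrite Rmult_1_l. apply RiemannInt_P5.
    - pose proof (Lint _ (Hu n)) as p'.
      transitivity (2 * RiemannInt p'). symmetry. apply (P_double (useq g n) (Hu n) p' p). rewrite (IH p'). simpl. ring. }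
  set (B := (2 * ln 2 - 2 * ln (1 - g)) * PI).
  destruct (Req_dec (RiemannInt pr) 0) as [E|E]; [exact E|exfalso].
  assert (HA : 0 < Rabs (RiemannInt pr)) by (apply Rabs_pos_lt; exact E).
  destruct (INR_unbounded (B / Rabs (RiemannInt pr))) as [n Hn].
  pose proof (Lint _ (Hu n)) as p.
  pose proof (P_bound g (useq g n) Hg) as Hb.
  assert (Rabs (useq g n) <= g) by (pose proof (useq_bd g n Hg); rewrite Rabs_right; lra).
  specialize (Hb H p). fold B in Hb. rewrite (Hind n p) in Hb.
  rewrite Rabs_mult, Rabs_right in Hb by (left; apply pow_lt; lra).
  pose proof (pow2_ge n).
  assert (B < INR n * Rabs (RiemannInt pr)).
  { apply (Rmult_lt_compat_r (Rabs (RiemannInt pr))) in Hn; [|exact HA].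
    unfold Rdiv in Hn. rewrite Rmult_assoc, Rinv_l in Hn by lra. lra. }
  assert (INR n * Rabs (RiemannInt pr) <= 2 ^ n * Rabs (RiemannInt pr)).
  { apply Rmult_le_compat_r; [apply Rabs_pos|exact H0]. }
  lra.
Qed.

Lemma J_part z (Hz : 2 < z) :
  improper_integral (fun x => ln (z - x) / (PI * sqrt (4 - x ^ 2))) (-2) 2 (- ln (G z)).
Proof.
  destruct (G_facts z Hz) as [Hg Hgz]. set (g := G z) in *.
  assert (HPI := PI_RGT_0).
  assert (Cz : forall t, 0 < z + 2 * cos t) by (intro t; pose proof (cos_bound t); lra).
  set (hJ := fun t => / PI * ln (z + 2 * cos t)).
  assert (CJ : forall t, continuity_pt hJ t).
  { intro t. unfold hJ. apply continuity_pt_mult. apply cont_const.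
    apply (cont_ln (fun t => z + 2 * cos t)).
    apply continuity_pt_plus. apply cont_const. apply continuity_pt_mult. apply cont_const. apply cont_cos.
    apply Cz. }
  assert (prJ : Riemann_integrable hJ 0 PI) by (apply ic; [lra|]; intros; apply CJ).
  replace (- ln g) with (RiemannInt prJ).
  - apply (improper_of_subst _ hJ (fun t => -2 * cos t) (fun t => 2 * sin t) (-2) 2 0 PI PI_RGT_0).
    + intros; apply dphi0.
    + intros t Ht. pose proof (sin_gt_0 t (proj1 Ht) (proj2 Ht)). lra.
    + rewrite cos_0; ring.
    + rewrite cos_PI; ring.
    + intros x Hx. apply continuity_pt_div.
      * apply (cont_ln (fun x => z - x)). apply continuity_pt_minus. apply cont_const. apply cont_id. lra.
      * apply continuity_pt_mult. apply cont_const.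
        apply (continuity_pt_comp (fun x => 4 - x ^ 2) sqrt).
        apply continuity_pt_minus. apply cont_const. apply continuity_pt_mult. apply cont_id.
        apply continuity_pt_mult. apply cont_id. apply cont_const.
        apply continuity_pt_sqrt. nra.
      * assert (0 < sqrt (4 - x ^ 2)) by (apply sqrt_lt_R0; nra).
        assert (0 < PI * sqrt (4 - x ^ 2)) by (apply Rmult_lt_0_compat; lra). lra.
    + intros; apply CJ.
    + intros t Ht. pose proof (sin_gt_0 t (proj1 Ht) (proj2 Ht)). unfold hJ.
      replace (4 - (-2 * cos t) ^ 2) with ((2 * sin t) ^ 2)
        by (pose proof (sin_cos_sq t); nra).
      rewrite sqrt_pow2 by lra. replace (z - -2 * cos t) with (z + 2 * cos t) by ring.
      field. lra.
  - assert (Hm : Rabs (- g) < 1) by (rewrite Rabs_Ropp, Rabs_right; lra).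
    assert (prL : Riemann_integrable (L (- g)) 0 PI) by (apply Lint; exact Hm).
    assert (prF : Riemann_integrable (fun t => L (- g) t + (- ln g) * fct_cte 1 t) 0 PI).
    { apply RiemannInt_P10. exact prL. apply RiemannInt_P14. }
    assert (prS : Riemann_integrable (fun t => / PI * (L (- g) t + (- ln g) * fct_cte 1 t)) 0 PI).
    { apply Riemann_integrable_scal; exact prF. }
    rewrite (RI_ext _ _ _ _ prJ prS ltac:(lra)).
    + rewrite (int_scal _ 0 PI (/ PI) ltac:(lra) prF prS).
      rewrite (int_lin _ _ 0 PI (- ln g) ltac:(lra) prL (RiemannInt_P14 0 PI 1) prF).
      rewrite RiemannInt_P15.
      assert (prL' : Riemann_integrable (L g) 0 PI) by (apply Lint; rewrite Rabs_right; lra).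
      rewrite <- (P_sym g ltac:(rewrite Rabs_right; lra) prL' prL).
      rewrite (P_zero g Hg prL'). field. lra.
    + intros t _. unfold hJ, L, fct_cte. f_equal.
      replace (z + 2 * cos t) with ((1 - 2 * - g * cos t + (- g) ^ 2) * / g).
      rewrite ln_mult, ln_Rinv by (try apply Rinv_0_lt_compat; try apply L_arg_pos; lra). ring.
      apply (Rmult_eq_reg_l g); [|lra]. field_simplify; [|lra]. nra.
Qed.

Theorem mainTheorem1 (lambda : R) (Hl : 0 < lambda) (z : R) (Hz : 2 < z) :
  exists I C Gint J : R,
    improper_integral
      (fun x => Rpower (4 - x ^ 2) (lambda - 1 / 2) / Rpower (z - x) lambda)
      (-2) 2 I /\
    improper_integral (fun x => Rpower (4 - x ^ 2) (lambda - 1 / 2)) (-2) 2 C /\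
    improper_integral (fun x => / (z - x) * (sqrt (4 - x ^ 2) / (2 * PI))) (-2) 2 Gint /\
    improper_integral (fun x => ln (z - x) / (PI * sqrt (4 - x ^ 2))) (-2) 2 J /\
    I = C * Rpower (G z) lambda /\
    Gint = G z /\
    I = C * Rpower Gint lambda /\
    I = C * exp (- lambda * J).
Proof.
  destruct (G_facts z Hz) as [Hg Hgz].
  assert (HPI := PI_RGT_0).
  assert (prC : Riemann_integrable (hC lambda) 0 PI).
  { apply ic; [lra|]. intros; apply hC_cont; exact Hl. }
  assert (prI : Riemann_integrable (hI lambda (G z)) 0 PI).
  { apply ic; [lra|]. intros; apply hI_cont; lra. }
  exists (Rpower (G z) lambda * RiemannInt prC), (RiemannInt prC), (G z), (- ln (G z)).
  split; [|split; [|split; [|split; [|split; [|split; [|split]]]]]].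
  - rewrite <- (I_value lambda (G z) Hl Hg prI prC).
    exact (I_part lambda z (G z) Hl Hg Hgz prI).
  - exact (C_part lambda Hl prC).
  - exact (Gint_part z Hz).
  - exact (J_part z Hz).
  - ring.
  - reflexivity.
  - ring.
  - unfold Rpower. rewrite Rmult_comm. f_equal. f_equal. ring.
Qed.
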